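(* Let $G$ be a finite abelian group, $k\ge1$, $\Gamma=G\wr\mathbb{Z}^k=\Sigma\rtimes_\alpha\mathbb{Z}^k$, and $\varphi$ an automorphism of $\Gamma$ with restriction $\varphi'=\varphi|_\Sigma$ and induced automorphism $\overline{\varphi}$ of $\Gamma/\Sigma\cong\mathbb{Z}^k$. Let $\varphi_1:\Gamma\to\Gamma$ be defined by $\varphi_1(hm)=\varphi'(h)\overline{\varphi}(m)$ for $h\in\Sigma$, $m\in\mathbb{Z}^k$. Then $\varphi_1$ is an automorphism of $\Gamma$ and $R(\varphi)=R(\varphi_1)$.
   Context: Reidemeister number $R(\psi)$: number of classes of the relation $x\sim gx\psi(g^{-1})$, $g\in\Gamma$ (possibly $\infty$). $\Sigma=\bigoplus_{x\in\mathbb{Z}^k}G_x$, $G_x\cong G$, $\alpha(x)(g_y)=g_{x+y}$; $\Sigma$ is the torsion subset of $\Gamma$ and hence $\varphi$-invariant. *)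

(* Defs.v *)
From mathcomp Require Import all_boot all_order all_algebra.
Set Implicit Arguments. Unset Strict Implicit. Unset Printing Implicit Defensive.
Import Order.TTheory GRing.Theory Num.Theory.
Local Open Scope ring_scope.

Notation Zk k := 'rV[int]_k.

(* finitely supported maps Z^k -> G  (elements of Sigma = (+)_{x in Z^k} G_x) *)
Definition finsupp (G : zmodType) (k : nat) (h : Zk k -> G) : Prop :=
  exists s : seq (Zk k), forall x, h x != 0 -> x \in s.

(* Gamma = G wr Z^k = Sigma x|_alpha Z^k, an element h m stored as (lamp, pos),
   with alpha(x)(g_y) = g_{x+y}, i.e. (alpha m h) y = h (y - m). *)
Record wreath (G : finZmodType) (k : nat) := Wr {
  lamp : Zk k -> G;
  pos : Zk k;
  lampP : finsupp lamp }.

Section Wreath.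
Variables (G : finZmodType) (k : nat).

Lemma finsupp_mul (h1 h2 : Zk k -> G) (m : Zk k) :
  finsupp h1 -> finsupp h2 -> finsupp (fun y => h1 y + h2 (y - m)).
Proof.
move=> [s1 H1] [s2 H2]; exists (s1 ++ map (fun z => z + m) s2) => x Hx.
rewrite mem_cat; case E1: (h1 x == 0).
  move/eqP: E1 => E1; move: Hx; rewrite E1 add0r => /H2 Hm.
  apply/orP; right; apply/mapP; exists (x - m) => //; by rewrite subrK.
by move/negbT: E1 => /H1 ->.
Qed.

Lemma finsupp_inv (h : Zk k -> G) (m : Zk k) :
  finsupp h -> finsupp (fun y => - h (y + m)).
Proof.
move=> [s H]; exists (map (fun z => z - m) s) => x; rewrite oppr_eq0 => /H Hx.
by apply/mapP; exists (x + m) => //; rewrite addrK.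
Qed.

Lemma finsupp0 : finsupp (fun _ : Zk k => (0 : G)).
Proof. by exists [::] => x; rewrite eqxx. Qed.

(* (h1, m1) (h2, m2) = (h1 + alpha(m1) h2, m1 + m2) *)
Definition wr_mul (a b : wreath G k) : wreath G k :=
  @Wr G k _ (pos a + pos b) (finsupp_mul (pos a) (lampP a) (lampP b)).

Definition wr_one : wreath G k := @Wr G k _ 0 finsupp0.

Definition wr_inv (a : wreath G k) : wreath G k :=
  @Wr G k _ (- pos a) (finsupp_inv (pos a) (lampP a)).

Definition wr_sigma (a : wreath G k) : wreath G k := @Wr G k _ 0 (lampP a).

Definition wr_Zk (m : Zk k) : wreath G k := @Wr G k _ m finsupp0.

Definition is_aut (phi : wreath G k -> wreath G k) : Prop :=
  bijective phi /\ forall a b, phi (wr_mul a b) = wr_mul (phi a) (phi b).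

(* phi_1 (h m) = phi'(h) phibar(m), where phi' = phi|_Sigma and phibar is the
   automorphism induced on Gamma/Sigma = Z^k (the quotient map being [pos]). *)
Definition phi1 (phi : wreath G k -> wreath G k) (a : wreath G k) : wreath G k :=
  wr_mul (phi (wr_sigma a)) (wr_Zk (pos (phi (wr_Zk (pos a))))).

Definition twisted_conj (psi : wreath G k -> wreath G k) (x y : wreath G k) : Prop :=
  exists g, y = wr_mul (wr_mul g x) (psi (wr_inv g)).

(* R(psi) = n : there are exactly n Reidemeister classes.
   R(psi) = infinity corresponds to: no n with reid_number_is psi n. *)
Definition reid_number_is (psi : wreath G k -> wreath G k) (n : nat) : Prop :=
  exists f : 'I_n -> wreath G k,
    (forall i j, twisted_conj psi (f i) (f j) -> i = j) /\
    (forall x, exists i, twisted_conj psi x (f i)).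

End Wreath.

(* Main.v *)
Require Import Defs.
From mathcomp Require Import all_boot all_order all_algebra all_fingroup all_solvable.
From Stdlib Require Import Classical ClassicalEpsilon FunctionalExtensionality PropExtensionality ProofIrrelevance.
Set Implicit Arguments. Unset Strict Implicit. Unset Printing Implicit Defensive.
Import Order.TTheory GRing.Theory Num.Theory.
Local Open Scope ring_scope.
Section LinAlg.
Variable k : nat.
Variable L : 'rV[int]_k -> 'rV[int]_k.
Hypothesis LD : forall a b, L (a + b) = L a + L b.

Lemma L0 : L 0 = 0.
Proof. by apply: (@addrI _ (L 0)); rewrite -LD !addr0. Qed.
Lemma LN a : L (- a) = - L a.
Proof. by apply: (@addrI _ (L a)); rewrite -LD !addrN L0. Qed.
Lemma LB a b : L (a - b) = L a - L b.
Proof. by rewrite LD LN. Qed.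
Lemma Ln a n : L (a *+ n) = L a *+ n.
Proof. by elim: n => [|n IH]; rewrite ?mulr0n ?L0 // !mulrS LD IH. Qed.
Lemma LZ (z : int) a : L (z *: a) = z *: L a.
Proof.
rewrite -[z]intz !scaler_int; case: z => n; first by rewrite -natz !mulrz_nat Ln.
by rewrite NegzE !mulrNz -natz !mulrz_nat LN Ln.
Qed.
Lemma Lsum (I : finType) (F : I -> 'rV[int]_k) : L (\sum_i F i) = \sum_i L (F i).
Proof. exact: (big_morph L LD L0). Qed.

Definition Amx : 'M[int]_k := \matrix_i L (delta_mx 0 i).
Lemma LmxE v : L v = v *m Amx.
Proof.
rewrite {1}(row_sum_delta v) Lsum mulmx_sum_row; apply: eq_bigr => i _.
by rewrite LZ rowK.
Qed.

Lemma fin_index_inj n (p : 'I_n -> 'rV[int]_k)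
  (cover : forall v, exists i, exists u, p i = v + L u) : forall v, L v = 0 -> v = 0.
Proof.
have step : forall i0 : 'I_k, exists Nu : int * 'rV[int]_k, (Nu.1 != 0) /\ L Nu.2 = Nu.1 *: delta_mx 0 i0.
  move=> i0.
  have hf : forall j : 'I_n.+1, exists i, exists u, p i = (j%:Z) *: delta_mx 0 i0 + L u.
    by move=> j; exact: cover.
  have [f hfP] := fin_all_exists hf.
  have : ~~ injectiveb f.
    apply/negP => /injectiveP /leq_card; by rewrite !card_ord ltnn.
  case/injectivePn => j1 [j2 hne heq].
  have [u1 h1] := hfP j1; have [u2 h2] := hfP j2.
  exists ((j1%:Z - j2%:Z), u2 - u1) => /=; split.
    by rewrite subr_eq0; apply: contra hne => /eqP [] h; apply/eqP/val_inj.
  rewrite LB; have E : j1%:Z *: delta_mx 0 i0 + L u1 = j2%:Z *: delta_mx 0 i0 + L u2 by rewrite -h1 -h2 heq.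
  have -> : L u2 = j1%:Z *: delta_mx 0 i0 + L u1 - j2%:Z *: delta_mx 0 i0.
    by rewrite E [_ + L u2]addrC addrK.
  by rewrite scalerBl addrAC addrK.
have [Nu hNu] := fin_all_exists step.
pose N : 'rV[int]_k := \row_i (Nu i).1.
pose B : 'M[int]_k := \matrix_i (Nu i).2.
have BA : B *m Amx = diag_mx N.
  apply/row_matrixP => i; rewrite row_mul rowK -LmxE row_diag_mx mxE.
  by case: (hNu i).
have detA : \det Amx != 0.
  have : \det (diag_mx N) != 0.
    by rewrite det_diag; apply/prodf_neq0 => i _; rewrite mxE; case: (hNu i).
  by rewrite -BA det_mulmx mulf_eq0 negb_or => /andP [].
move=> v; rewrite LmxE => hv.
have : v *m (Amx *m \adj Amx) = 0 by rewrite mulmxA hv mul0mx.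
rewrite mul_mx_adj mul_mx_scalar => E.
apply/matrixP => i j; have := congr1 (fun A : 'M[int]_(1,k) => A i j) E.
rewrite !mxE => /eqP; rewrite mulf_eq0 (negbTE detA) /= => /eqP //.
Qed.
End LinAlg.
Lemma tors (U : finZmodType) (x : U) : x *+ #|U| = 0.
Proof. by rewrite -FinRing.zmodXgE -cardsT expg_cardG ?inE. Qed.

Section W.
Variables (G : finZmodType) (k : nat).
Local Notation W := (wreath G k).
Local Notation mul := (@wr_mul G k).
Local Notation Zk' := (@wr_Zk G k).
Local Notation one := (@wr_one G k).
Local Notation inv := (@wr_inv G k).
Local Notation sig := (@wr_sigma G k).

Lemma wr_ext (a b : W) : (forall y, lamp a y = lamp b y) -> pos a = pos b -> a = b.
Proof.
case: a b => la pa ha [lb pb hb] /= E Ep.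
have E' : la = lb by apply: functional_extensionality.
subst; congr Wr; exact: proof_irrelevance.
Qed.

Lemma mulA a b c : mul a (mul b c) = mul (mul a b) c.
Proof. by apply: wr_ext => /=; [move=> y; rewrite addrA opprD addrA | rewrite addrA]. Qed.
Lemma mul1 a : mul one a = a.
Proof. by apply: wr_ext => /=; [move=> y; rewrite add0r subr0 | rewrite add0r]. Qed.
Lemma mulg1 a : mul a one = a.
Proof. by apply: wr_ext => /=; [move=> y; rewrite addr0 | rewrite addr0]. Qed.
Lemma mulV a : mul (inv a) a = one.
Proof. by apply: wr_ext => /=; [move=> y; rewrite opprK addNr | rewrite addNr]. Qed.
Lemma mulgV a : mul a (inv a) = one.
Proof. by apply: wr_ext => /=; [move=> y; rewrite subrK addrN | rewrite addrN]. Qed.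
Lemma mulKg a b : mul (inv a) (mul a b) = b.
Proof. by rewrite mulA mulV mul1. Qed.
Lemma mulVKg a b : mul a (mul (inv a) b) = b.
Proof. by rewrite mulA mulgV mul1. Qed.
Lemma mulgK a b : mul (mul b a) (inv a) = b.
Proof. by rewrite -mulA mulgV mulg1. Qed.
Lemma mulgVK a b : mul (mul b (inv a)) a = b.
Proof. by rewrite -mulA mulV mulg1. Qed.
Lemma mulIg a b c : mul a b = mul a c -> b = c.
Proof. by move=> E; rewrite -(mulKg a b) E mulKg. Qed.
Lemma invE a b : mul a b = one -> b = inv a.
Proof. by move=> E; apply: (@mulIg a); rewrite E mulgV. Qed.
Lemma invM a b : inv (mul a b) = mul (inv b) (inv a).
Proof. by symmetry; apply: invE; rewrite mulA mulgK mulgV. Qed.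
Lemma invK a : inv (inv a) = a.
Proof. by symmetry; apply: invE; rewrite mulV. Qed.

Lemma decomp a : a = mul (sig a) (Zk' (pos a)).
Proof. by apply: wr_ext => /=; [move=> y; rewrite addr0 | rewrite add0r]. Qed.
Lemma ZkD u v : Zk' (u + v) = mul (Zk' u) (Zk' v).
Proof. by apply: wr_ext => /= [y|]; rewrite ?addr0. Qed.
Lemma Zk0 : Zk' 0 = one. Proof. by apply: wr_ext. Qed.
Lemma ZkN u : Zk' (- u) = inv (Zk' u).
Proof. by apply: invE; rewrite -ZkD addrN Zk0. Qed.
Lemma sigma_mulZ s v : pos s = 0 -> sig (mul s (Zk' v)) = s.
Proof. by move=> hs; apply: wr_ext => /= [y|]; rewrite ?addr0. Qed.
Lemma sigmaS s : pos s = 0 -> sig s = s.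
Proof. by move=> hs; apply: wr_ext. Qed.
Lemma pos_inv a : pos (inv a) = - pos a. Proof. by []. Qed.
Lemma sigma_comm s t : pos s = 0 -> pos t = 0 -> mul s t = mul t s.
Proof. by move=> hs ht; apply: wr_ext => /= [y|]; rewrite hs ht ?subr0 ?addr0 // addrC. Qed.

Definition cj (v : Zk k) (s : W) := mul (mul (Zk' v) s) (Zk' (- v)).
Lemma pos_cj v s : pos s = 0 -> pos (cj v s) = 0.
Proof. by move=> hs; rewrite /= hs addr0 addrN. Qed.
Lemma cjE c s : pos s = 0 -> mul (mul c s) (inv c) = cj (pos c) s.
Proof.
move=> hs; apply: wr_ext => /= [y|]; last by rewrite hs addr0 addrN.
by rewrite hs !addr0 subrK add0r addrAC addrN add0r.
Qed.
Lemma cjM v s t : cj v (mul s t) = mul (cj v s) (cj v t).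
Proof. by rewrite /cj ZkN !mulA mulgVK. Qed.
Lemma cjD u v s : cj (u + v) s = cj u (cj v s).
Proof. by rewrite /cj !ZkN ZkD invM !mulA. Qed.
Lemma cj0 s : cj 0 s = s.
Proof. by rewrite /cj oppr0 Zk0 mul1 mulg1. Qed.

Fixpoint pw (a : W) (n : nat) : W := if n is n'.+1 then mul a (pw a n') else one.
Lemma pos_pw a n : pos (pw a n) = pos a *+ n.
Proof. by elim: n => //= n IH; rewrite IH mulrS. Qed.
Lemma sig_pw a n : pos a = 0 -> pw a n = sig (pw a n) /\ forall y, lamp (pw a n) y = lamp a y *+ n.
Proof.
move=> ha; elim: n => [|n [IH1 IH2]] /=; first by split => //; apply: wr_ext.
split; first by apply: wr_ext => //=; rewrite pos_pw ha mul0rn addr0.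
by move=> y; rewrite IH2 ha subr0 mulrS.
Qed.
Lemma pw_card a : pos a = 0 -> pw a #|G| = one.
Proof.
move=> ha; have [_ H] := sig_pw #|G| ha.
by apply: wr_ext => [y|]; rewrite ?H ?tors // pos_pw ha mul0rn.
Qed.

Lemma rv_tors (v : Zk k) n : (0 < n)%N -> v *+ n = 0 -> v = 0.
Proof.
move=> hn E; apply/matrixP => i j; have := congr1 (fun A : 'M[int]_(1,k) => A i j) E.
have F : forall m, (v *+ m) i j = v i j *+ m by elim=> [|m IH]; rewrite ?mulr0n ?mxE // !mulrS mxE IH.
by rewrite F mxE => /eqP; rewrite mulrn_eq0 => /orP [/eqP hn0|/eqP //]; rewrite hn0 in hn.
Qed.

Section Hom.
Variable phi : W -> W.
Hypothesis phiM : forall a b, phi (mul a b) = mul (phi a) (phi b).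

Lemma phi1g : phi one = one.
Proof. by apply: (@mulIg (phi one)); rewrite -phiM !mulg1. Qed.
Lemma phiV a : phi (inv a) = inv (phi a).
Proof. by apply: invE; rewrite -phiM mulgV phi1g. Qed.
Lemma phi_pw a n : phi (pw a n) = pw (phi a) n.
Proof. by elim: n => /= [|n IH]; rewrite ?phi1g // phiM IH. Qed.
Lemma phi_sig a : pos a = 0 -> pos (phi a) = 0.
Proof.
move=> ha; have := congr1 (@pos G k) (phi_pw a #|G|).
rewrite pw_card // phi1g pos_pw /= => /esym; apply: rv_tors.
by apply/card_gt0P; exists 0.
Qed.

Definition Mb v := pos (phi (Zk' v)).
Lemma pos_phi a : pos (phi a) = Mb (pos a).
Proof. by rewrite {1}(decomp a) phiM /= phi_sig // add0r. Qed.
Lemma MbD u v : Mb (u + v) = Mb u + Mb v.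
Proof. by rewrite /Mb ZkD phiM. Qed.
Lemma Mb0 : Mb 0 = 0.
Proof. by rewrite /Mb Zk0 phi1g. Qed.
Lemma MbN u : Mb (- u) = - Mb u.
Proof. by rewrite /Mb ZkN phiV. Qed.
Lemma phi_cj v s : pos s = 0 -> phi (cj v s) = cj (Mb v) (phi s).
Proof. by move=> hs; rewrite /Mb -cjE ?phi_sig // /cj !phiM ZkN phiV. Qed.

Lemma pos_phi1 a : pos (phi1 phi a) = Mb (pos a).
Proof. by rewrite /= phi_sig // add0r. Qed.
Lemma phi1M a b : phi1 phi (mul a b) = mul (phi1 phi a) (phi1 phi b).
Proof.
rewrite /phi1 -/(Mb _) -!/(Mb _) /=.
have -> : sig (mul a b) = mul (sig a) (cj (pos a) (sig b)).
  by apply: wr_ext => /= [y|]; rewrite ?addr0 ?subr0 ?addrN ?add0r // opprK addrNK.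
rewrite phiM phi_cj // MbD ZkD /cj ZkN !mulA mulgVK //.
Qed.
Definition D n := sig (phi (Zk' n)).
Lemma pos_D n : pos (D n) = 0. Proof. by []. Qed.
Lemma phiZ n : phi (Zk' n) = mul (D n) (Zk' (Mb n)).
Proof. exact: decomp. Qed.
Lemma cj_com c s : pos s = 0 -> mul c s = mul (cj (pos c) s) c.
Proof. by move=> hs; rewrite -cjE // mulgVK. Qed.
Lemma phi_D g : phi g = mul (D (pos g)) (phi1 phi g).
Proof.
rewrite {1}(decomp g) phiM phiZ /phi1 -/(Mb _) !mulA; congr mul.
by apply: sigma_comm => //; apply: phi_sig.
Qed.
Lemma cj1 v : cj v one = one.
Proof. by rewrite /cj mulg1 ZkN mulgV. Qed.
Lemma cjV v s : cj v (inv s) = inv (cj v s).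
Proof. by apply: invE; rewrite -cjM mulgV cj1. Qed.
Lemma D0 : D 0 = one.
Proof. by apply: wr_ext => //= y; rewrite Zk0 phi1g. Qed.
Lemma DD a b : D (a + b) = mul (D a) (cj (Mb a) (D b)).
Proof.
have E : phi (Zk' (a+b)) = mul (mul (D a) (cj (Mb a) (D b))) (Zk' (Mb a + Mb b)).
  rewrite ZkD phiM !phiZ ZkD !mulA; congr mul; rewrite -!mulA; congr mul.
  by rewrite -ZkD addNr Zk0 mulg1.
rewrite {1}/D E sigma_mulZ //; change (pos (D a) + pos (cj (Mb a) (D b)) = 0).
by rewrite pos_D pos_cj // add0r.
Qed.
End Hom.

Section Aut.
Variables phi psi : W -> W.
Hypothesis phiM : forall a b, phi (mul a b) = mul (phi a) (phi b).
Hypothesis psiM : forall a b, psi (mul a b) = mul (psi a) (psi b).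
Hypothesis K : cancel phi psi.
Lemma phi1K : cancel (phi1 phi) (phi1 psi).
Proof.
move=> a.
have Hs : sig (phi1 phi a) = phi (sig a) by rewrite /phi1 sigma_mulZ //; exact: phi_sig.
have Hp := pos_phi1 phiM a.
rewrite {1}/phi1 Hs K Hp [Mb phi _]/Mb -[pos (psi (Zk' _))]/(Mb psi _) -(pos_phi psiM) K.
by rewrite /= -decomp.
Qed.
End Aut.

Lemma pos_mul a b : pos (mul a b) = pos a + pos b. Proof. by []. Qed.

Section Key.
Variable phi : W -> W.
Hypothesis phiM : forall a b, phi (mul a b) = mul (phi a) (phi b).
Definition L v := v - Mb phi v.
Variable c : Zk k -> W.
Hypothesis hc0 : forall m, pos (c m) = 0.
Hypothesis hc : forall m n, c (m + L n) = mul (cj n (c m)) (cj (m + L n) (D phi n)).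
Definition F x := mul (c (pos x)) x.
Definition Finv x := mul (inv (c (pos x))) x.
Lemma pos_F x : pos (F x) = pos x.
Proof. by rewrite /F pos_mul hc0 add0r. Qed.
Lemma FK : cancel F Finv.
Proof. by move=> x; rewrite /Finv pos_F /F mulKg. Qed.
Lemma FinvK : cancel Finv F.
Proof. by move=> x; rewrite /F /Finv pos_mul pos_inv hc0 oppr0 add0r mulVKg. Qed.

Lemma Dinv n m : inv (cj (n + m) (D phi (- n))) = cj (m + L n) (D phi n).
Proof.
have E : cj (Mb phi n) (D phi (- n)) = inv (D phi n).
  by apply: invE; rewrite -DD // addrN D0.
have -> : n + m = (m + L n) + Mb phi n by rewrite /L -addrA subrK addrC.
by rewrite cjD E cjV invK.
Qed.

Lemma key g x y : y = mul (mul g x) (phi (inv g)) <->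
   F y = mul (mul g (F x)) (phi1 phi (inv g)).
Proof.
set n := pos g; set m := pos x.
set z := mul (mul g x) (phi1 phi (inv g)).
have hz : pos z = m + L n.
  rewrite /z pos_mul pos_phi1 // pos_mul pos_inv MbN // /L [n + m]addrC -addrA //.
set Y := cj (n + m) (D phi (- n)).
have hY : pos Y = 0 by apply: pos_cj.
have E1 : mul (mul g x) (phi (inv g)) = mul Y z.
  by rewrite (phi_D phiM (inv g)) mulA (cj_com (mul g x) (pos_D _ _)) /z -mulA.
have E2 : mul (mul g (F x)) (phi1 phi (inv g)) = mul (cj n (c m)) z.
  by rewrite /F /z !mulA (cj_com g (hc0 _)).
have hc' : c (m + L n) = mul (cj n (c m)) (inv Y) by rewrite hc /Y Dinv.
split.
  move=> ->; rewrite E1 /F pos_mul hY add0r hz hc' E2.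
  by rewrite -mulA (mulA (inv Y)) mulV mul1.
move=> H; have hy : pos y = m + L n.
  by move: (congr1 (@pos G k) H); rewrite pos_F E2 pos_mul (pos_cj _ (hc0 _)) add0r hz.
rewrite /F hy hc' E2 in H; rewrite E1; apply: (@mulIg (mul (cj n (c m)) (inv Y))).
by rewrite H -mulA (mulA (inv Y)) mulV mul1.
Qed.
End Key.

Section Constr.
Variable phi : W -> W.
Hypothesis phiM : forall a b, phi (mul a b) = mul (phi a) (phi b).
Hypothesis Linj : forall v, L phi v = 0 -> v = 0.
Lemma LDp a b : L phi (a + b) = L phi a + L phi b.
Proof. by rewrite /L MbD // opprD addrACA. Qed.
Lemma LNp a : L phi (- a) = - L phi a.
Proof. by rewrite /L MbN // opprD. Qed.
Lemma L0p : L phi 0 = 0.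
Proof. by rewrite /L Mb0 // subr0. Qed.
Definition Rel r m := exists n, m = r + L phi n.
Definition rep m := epsilon (inhabits 0) (fun r => Rel r m).
Lemma rep_spec m : Rel (rep m) m.
Proof. by apply: (epsilon_spec (inhabits 0) (fun r => Rel r m)); exists m, 0; rewrite L0p addr0. Qed.
Lemma rep_eq m n : rep (m + L phi n) = rep m.
Proof.
rewrite /rep; congr epsilon; apply: functional_extensionality => r.
apply: propositional_extensionality; split=> [[n' hn]|[n' hn]].
  by exists (n' - n); rewrite LDp LNp addrA -hn addrK.
by exists (n' + n); rewrite hn (LDp n' n) [RHS]addrA.
Qed.
Definition nn m := epsilon (inhabits 0) (fun n => m = rep m + L phi n).
Lemma nn_spec m : m = rep m + L phi (nn m).
Proof. by apply: (epsilon_spec (inhabits 0) (fun n => m = rep m + L phi n)); exact: rep_spec. Qed.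
Lemma nn_eq m n : nn (m + L phi n) = nn m + n.
Proof.
have E := nn_spec (m + L phi n); rewrite rep_eq {1}(nn_spec m) -addrA -LDp in E.
move/addrI: E => E.
apply/eqP; rewrite -subr_eq0; apply/eqP; apply: Linj.
by rewrite LDp LNp E subrr.
Qed.
Definition cc m := cj m (D phi (nn m)).
Lemma cc0 m : pos (cc m) = 0. Proof. by apply: pos_cj. Qed.
Lemma cc_eq m n : cc (m + L phi n) = mul (cj n (cc m)) (cj (m + L phi n) (D phi n)).
Proof.
rewrite /cc nn_eq (addrC (nn m) n) DD // cjM -!cjD.
have -> : m + L phi n + Mb phi n = n + m by rewrite /L -addrA subrK addrC.
by apply: sigma_comm; apply: pos_cj.
Qed.
End Constr.

Lemma noreid (phi psi : W -> W) (phiM : forall a b, phi (mul a b) = mul (phi a) (phi b))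
  (hpos : forall a, pos (psi a) = Mb phi (pos a)) n :
  reid_number_is psi n -> forall v, L phi v = 0 -> v = 0.
Proof.
case=> f [_ hc].
apply: (@fin_index_inj k (L phi) (LDp phiM) n (fun i => pos (f i))) => v.
have [i [g hg]] := hc (Zk' v); exists i, (pos g).
rewrite hg pos_mul pos_mul hpos pos_inv MbN // /L /=.
by rewrite [pos g + v]addrC -addrA.
Qed.
End W.

Lemma transferR (T : Type) (R1 R2 : T -> T -> Prop) (F Finv : T -> T)
  (FK : cancel F Finv) (KF : cancel Finv F) (H : forall x y, R1 x y <-> R2 (F x) (F y)) n :
  (exists f : 'I_n -> T, (forall i j, R1 (f i) (f j) -> i = j) /\ forall x, exists i, R1 x (f i)) <->
  (exists f : 'I_n -> T, (forall i j, R2 (f i) (f j) -> i = j) /\ forall x, exists i, R2 x (f i)).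
Proof.
split=> [[f [Hi Hc]]|[f [Hi Hc]]].
  exists (fun i => F (f i)); split=> [i j /H /Hi //|x].
  by have [i /H] := Hc (Finv x); rewrite KF => ?; exists i.
exists (fun i => Finv (f i)); split=> [i j /H|x]; first by rewrite !KF => /Hi.
by have [i hi] := Hc (F x); exists i; apply/H; rewrite KF.
Qed.

Theorem mainTheorem4 (G : finZmodType) (k : nat) (hk : (0 < k)%N)
  (phi : wreath G k -> wreath G k) (hphi : is_aut phi) :
  is_aut (phi1 phi) /\
  (forall n : nat, reid_number_is phi n <-> reid_number_is (phi1 phi) n).
Proof.
case: hphi => [[psi K1 K2] phiM].
have psiM : forall a b, psi (wr_mul a b) = wr_mul (psi a) (psi b).
  by move=> a b; rewrite -{1}(K2 a) -{1}(K2 b) -phiM K1.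
split.
  split; last exact: phi1M phiM.
  by exists (phi1 psi); [exact: phi1K phiM psiM K1 | exact: phi1K psiM phiM K2].
move=> n.
case: (classic (forall v, L phi v = 0 -> v = 0)) => [Linj|NL].
  rewrite /reid_number_is. apply: (@transferR _ (twisted_conj phi) (twisted_conj (phi1 phi)) _ _ (FK (cc0 phi)) (FinvK (cc0 phi))) => x y.
  split=> [[g hg]|[g hg]]; exists g; apply/(key phiM (cc0 phi) (cc_eq phiM Linj)) => //.
split=> H; exfalso; apply: NL.
  exact: (noreid phiM (pos_phi phiM) H).
exact: (noreid phiM (pos_phi1 phiM) H).
Qed.
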